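(* Let $N\ge0$, $m\ge1$, $A_0,\dots,A_N\in\mathbb{C}^{n\times n}$. Then $$\mathcal{F}(L_m)\subset\Big\{z\in\mathbb{C}:\ d(\mathcal{F}(A_0),z)\le\sum_{\ell=1}^N\|A_\ell\|\Big\}.$$
   Context: $\|\cdot\|$ is the spectral norm. For $B\in\mathbb{C}^{k\times k}$, $\mathcal{F}(B)=\{x^*Bx:x\in\mathbb{C}^k,\|x\|=1\}$ is the field of values; $d(\mathcal{S},z)$ is the distance from the point $z$ to the closed set $\mathcal{S}$. $L_m\in\mathbb{C}^{mn\times mn}$ is the lower block-triangular block-Toeplitz matrix with $n\times n$ blocks whose $(r,s)$ block equals $A_{r-s}$ if $0\le r-s\le\min(m-1,N)$ and $0$ otherwise. *)

(* Defs.v *)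
(* The complex field C is abstracted as an arbitrary
   numClosedFieldType (e.g. algC). *)
From HB Require Import structures.
From mathcomp Require Import all_boot all_order all_algebra all_field.
Set Implicit Arguments. Unset Strict Implicit. Unset Printing Implicit Defensive.
Import Order.TTheory GRing.Theory Num.Theory.
Local Open Scope ring_scope.

Definition vnorm (C : numClosedFieldType) (k : nat) (x : 'cV[C]_k) : C :=
  sqrtC (\sum_(i < k) `|x i 0| ^+ 2).

Definition adj_mx (C : numClosedFieldType) (k l : nat) (x : 'M[C]_(k, l)) :
  'M[C]_(l, k) := (map_mx Num.conj x)^T.

Definition fov (C : numClosedFieldType) (k : nat) (B : 'M[C]_k) (z : C) : Prop :=
  exists x : 'cV[C]_k, vnorm x = 1 /\ z = (adj_mx x *m B *m x) 0 0.

(* s is the spectral norm of B, i.e. s = sup_{x <> 0} ||Bx||/||x||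
   (written as: s is the least nonnegative t with ||Bx|| <= t ||x|| for all x) *)
Definition is_spectral_norm (C : numClosedFieldType) (k l : nat)
    (B : 'M[C]_(k, l)) (s : C) : Prop :=
  0 <= s /\ (forall x : 'cV[C]_l, vnorm (B *m x) <= s * vnorm x) /\
  (forall t : C, 0 <= t -> (forall x : 'cV[C]_l, vnorm (B *m x) <= t * vnorm x) ->
     s <= t).

(* d(S, z) <= r, with d(S,z) = inf_{w in S} |w - z| *)
Definition dist_le (C : numClosedFieldType) (S : C -> Prop) (z r : C) : Prop :=
  forall e : C, 0 < e -> exists w, S w /\ `|w - z| < r + e.

Definition Lmat (C : numClosedFieldType) (n N m : nat) (A : nat -> 'M[C]_n) :
    'M[C]_(\sum_(r < m) n) :=
  \mxblock_(r < m, s < m)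
    (if (s <= r)%N && (r - s <= minn m.-1 N)%N then A (r - s)%N else 0 : 'M[C]_n).

(* Main.v *)
Require Import Defs.
From HB Require Import structures.
From mathcomp Require Import all_boot all_order all_algebra all_field.
From mathcomp Require Import ring.
Set Implicit Arguments. Unset Strict Implicit. Unset Printing Implicit Defensive.
Import Order.TTheory GRing.Theory Num.Theory.
Local Open Scope ring_scope.

Section Forms.
Variable C : numClosedFieldType.
Implicit Types (k : nat).

Definition sf k (M : 'M[C]_k) (u v : 'cV[C]_k) : C := (adj_mx u *m M *m v) 0 0.
Definition nq k (u : 'cV[C]_k) : C := sf 1%:M u u.

Lemma adj_mxD k (u v : 'cV[C]_k) : adj_mx (u + v) = adj_mx u + adj_mx v.
Proof. by apply/matrixP => i j; rewrite !mxE rmorphD. Qed.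
Lemma adj_mxZ k a (u : 'cV[C]_k) : adj_mx (a *: u) = a^* *: adj_mx u.
Proof. by apply/matrixP => i j; rewrite !mxE rmorphM. Qed.

Lemma sfE k (M : 'M[C]_k) u v :
  sf M u v = \sum_i \sum_j (u i 0)^* * M i j * v j 0.
Proof.
rewrite /sf mxE; under eq_bigr do rewrite mxE mulr_suml.
rewrite exchange_big; apply: eq_bigr => i _; apply: eq_bigr => j _.
by rewrite !mxE.
Qed.

Lemma sfDl k (M : 'M[C]_k) u1 u2 v : sf M (u1 + u2) v = sf M u1 v + sf M u2 v.
Proof. by rewrite /sf adj_mxD !mulmxDl mxE. Qed.
Lemma sfDr k (M : 'M[C]_k) u v1 v2 : sf M u (v1 + v2) = sf M u v1 + sf M u v2.
Proof. by rewrite /sf !mulmxDr mxE. Qed.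
Lemma sfZl k (M : 'M[C]_k) a u v : sf M (a *: u) v = a^* * sf M u v.
Proof. by rewrite /sf adj_mxZ -!scalemxAl mxE. Qed.
Lemma sfZr k (M : 'M[C]_k) a u v : sf M u (a *: v) = a * sf M u v.
Proof. by rewrite /sf -!scalemxAr mxE. Qed.
Lemma sf_addM k (M1 M2 : 'M[C]_k) u v : sf (M1 + M2) u v = sf M1 u v + sf M2 u v.
Proof. by rewrite /sf mulmxDr mulmxDl mxE. Qed.
Lemma sf_scaleM k (M : 'M[C]_k) a u v : sf (a *: M) u v = a * sf M u v.
Proof. by rewrite /sf -scalemxAr -scalemxAl mxE. Qed.
Lemma sf_oppM k (M : 'M[C]_k) u v : sf (- M) u v = - sf M u v.
Proof. by rewrite -scaleN1r sf_scaleM mulN1r. Qed.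

Lemma sf1E k (u v : 'cV[C]_k) : sf 1%:M u v = \sum_i (u i 0)^* * v i 0.
Proof.
rewrite sfE; apply: eq_bigr => i _; rewrite (bigD1 i) //= big1 ?addr0.
  by rewrite mxE eqxx mulr1.
by move=> j /negbTE ji; rewrite mxE eq_sym ji mulr0 mul0r.
Qed.

Lemma sf1_conj k (u v : 'cV[C]_k) : (sf 1%:M u v)^* = sf 1%:M v u.
Proof.
rewrite !sf1E rmorph_sum; apply: eq_bigr => i _.
by rewrite rmorphM /= conjCK mulrC.
Qed.

Lemma nqE k (u : 'cV[C]_k) : nq u = \sum_i `|u i 0| ^+ 2.
Proof. by rewrite /nq sf1E; apply: eq_bigr => i _; rewrite normCKC. Qed.

Lemma nq_ge0 k (u : 'cV[C]_k) : 0 <= nq u.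
Proof. by rewrite nqE; apply: sumr_ge0 => i _; rewrite exprn_ge0. Qed.

Lemma nq_eq0 k (u : 'cV[C]_k) : nq u = 0 -> u = 0.
Proof.
rewrite nqE => /eqP; rewrite psumr_eq0; last by move=> i _; rewrite exprn_ge0.
move=> /allP H; apply/matrixP => i j; rewrite (ord1 j) mxE.
have := H i (mem_index_enum i); rewrite /= sqrf_eq0 normr_eq0 => /eqP //.
Qed.

Lemma nq_real k (u : 'cV[C]_k) : (nq u)^* = nq u.
Proof. by apply: conj_Creal; apply: ger0_real; apply: nq_ge0. Qed.


Lemma sf0l k (M : 'M[C]_k) v : sf M 0 v = 0.
Proof.
rewrite /sf (_ : adj_mx (0 : 'cV[C]_k) = 0); first by rewrite !mul0mx mxE.
by apply/matrixP => i j; rewrite !mxE rmorph0.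
Qed.

Lemma realC (x : C) : x^* = x -> x \is Num.real.
Proof. by move=> h; rewrite CrealE h. Qed.

Lemma key k (M : 'M[C]_k) (x y : 'cV[C]_k) :
  0 < nq x -> 0 < nq y -> sf M x x = 0 -> sf M y y = nq y ->
  exists w, nq w = nq x + nq y /\ sf M w w = nq y.
Proof.
move=> px qy Mx My.
set p := nq x in px *; set q := nq y in qy My *.
set c := sf M x y; set d := sf M y x; set e := c - d^*.
pose z := if e == 0 then 1 else e^* / `|e|.
have zz : z^* * z = 1.
  rewrite /z; case: eqP => [_|/eqP e0]; first by rewrite rmorph1 mulr1.
  rewrite rmorphM /= conjCK fmorphV /= conj_normC mulrACA -invfM -normCK.
  by rewrite mulfV // expf_neq0 // normr_eq0.
have ze : (z * e)^* = z * e.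
  rewrite /z; case: eqP => [->|/eqP e0]; first by rewrite mulr0 rmorph0.
  have -> : e^* / `|e| * e = `|e| by rewrite mulrAC -normCKC expr2 mulfK ?normr_eq0.
  exact: conj_normC.
pose u := z *: y.
have nu : nq u = q by rewrite /nq /u sfZl sfZr mulrA zz mul1r.
have Mu : sf M u u = q by rewrite /u sfZl sfZr mulrA zz mul1r.
pose t := sf M x u + sf M u x.
have tr : t^* = t.
  rewrite /t /u sfZl sfZr -/c -/d.
  move: ze; rewrite /e => H.
  rewrite rmorphD !rmorphM /= conjCK.
  rewrite rmorphM rmorphB /= conjCK in H.
  apply/eqP; rewrite -subr_eq0; apply/eqP.
  transitivity (z^* * (c^* - d) - z * (c - d^*)); first by ring.
  by rewrite H subrr.
pose g := sf 1%:M x u + sf 1%:M u x.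
have gr : g^* = g.
  by rewrite /g rmorphD /= !sf1_conj addrC.
have pr : p \is Num.real by apply: gtr0_real.
have qr : q \is Num.real by apply: gtr0_real.
have p0 : p != 0 by rewrite gt_eqF.
have q0 : q != 0 by rewrite gt_eqF.
pose B1 := q * g - t * (p + q).
have gR := realC gr; have tR := realC tr.
have B1r : B1 \is Num.real.
  apply: rpredB; apply: rpredM => //; exact: rpredD.
pose D := B1 ^+ 2 + 4 * (q * p) ^+ 2.
have D0 : 0 <= D.
  apply: addr_ge0; first by rewrite -realEsqr.
  apply: mulr_ge0; first by rewrite ler0n.
  by rewrite -realEsqr rpredM.
pose s := sqrtC D.
have sr : s \is Num.real by apply: sqrtC_real.
pose al := (- B1 + s) / (2 * q * p).
have alr : al \is Num.real by rewrite rpredM ?rpredV ?rpredD ?rpredN ?rpredM ?rpred_nat.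
have alc : al^* = al by apply: conj_Creal.
have Qd : q * p * al ^+ 2 + B1 * al - q * p = 0.
  have two0 : (2 : C) != 0 by rewrite pnatr_eq0.
  transitivity ((s ^+ 2 - D) / (4 * q * p)); last by rewrite sqrtCK subrr mul0r.
  rewrite /al /D; field.
  by rewrite p0 q0.
pose w0 := al *: x + u.
have nw0 : nq w0 = al ^+ 2 * p + al * g + q.
  rewrite /nq /w0 !sfDl !sfDr !sfZl !sfZr alc (_ : sf 1%:M x x = p) //.
  rewrite (mulrA (z^*) z) zz mul1r (_ : sf 1%:M y y = q) // /g /u sfZl sfZr; ring.
have Mw0 : sf M w0 w0 = al * t + q.
  rewrite /w0 !sfDl !sfDr !sfZl !sfZr alc Mx (mulrA (z^*) z) zz mul1r My /t /u sfZl sfZr; ring.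
have n0 : nq w0 != 0.
  apply/eqP => /nq_eq0 w00.
  have uE : u = (- al) *: x.
    by apply/eqP; rewrite scaleNr -addr_eq0 addrC; apply/eqP; exact: w00.
  by move: Mu; rewrite uE sfZl sfZr Mx !mulr0 => /esym/eqP; rewrite (negbTE q0).
have keq : (q + al * t) * (p + q) = q * nq w0.
  rewrite nw0; apply/eqP; rewrite -subr_eq0; apply/eqP.
  transitivity (- (q * p * al ^+ 2 + B1 * al - q * p)); first by rewrite /B1; ring.
  by rewrite Qd oppr0.
pose r := (p + q) / nq w0.
have r0 : 0 <= r by rewrite divr_ge0 ?nq_ge0 // addr_ge0 // ltW.
pose sc := sqrtC r.
have scc : sc^* = sc by apply: conj_Creal; apply: sqrtC_real.
exists (sc *: w0); split.
  by rewrite /nq sfZl sfZr -/(nq w0) scc mulrA -expr2 sqrtCK /r -mulrA mulVf // mulr1.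
rewrite sfZl sfZr Mw0 scc mulrA -expr2 sqrtCK /r.
by rewrite mulrC mulrA [al * t + q]addrC keq mulfK.
Qed.


Lemma nq_gt0 k (x : 'cV[C]_k) : nq x != 0 -> 0 < nq x.
Proof. by move=> h; rewrite lt_def h nq_ge0. Qed.

Lemma conv2 k (B : 'M[C]_k) (x y : 'cV[C]_k) :
  exists w, nq w = nq x + nq y /\ sf B w w = sf B x x + sf B y y.
Proof.
have [/nq_eq0 x0|px] := eqVneq (nq x) 0.
  by exists y; rewrite x0 /nq !sf0l !add0r.
have [/nq_eq0 y0|qy] := eqVneq (nq y) 0.
  by exists x; rewrite y0 /nq !sf0l !addr0.
set p := nq x in px *; set q := nq y in qy *.
set a := sf B x x; set b := sf B y y.
have [ceq|cne] := eqVneq (a / p) (b / q).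
  have r0 : 0 <= (p + q) / p by rewrite divr_ge0 ?addr_ge0 ?nq_ge0.
  pose sc := sqrtC ((p + q) / p).
  have scc : sc^* = sc by apply: conj_Creal; apply: sqrtC_real.
  exists (sc *: x); split.
    by rewrite /nq sfZl sfZr scc mulrA -expr2 sqrtCK -mulrA mulVf // mulr1.
  rewrite sfZl sfZr scc mulrA -expr2 sqrtCK.
  have -> : b = a / p * q by rewrite ceq divfK.
  rewrite -/a; clearbody a; by field.
pose c1 := a / p; pose c2 := b / q.
have dc : c2 - c1 != 0 by rewrite subr_eq0 eq_sym.
pose M := (c2 - c1)^-1 *: (B - c1 *: 1%:M).
have sfM v : sf M v v = (c2 - c1)^-1 * (sf B v v - c1 * nq v).
  by rewrite /M sf_scaleM sf_addM sf_oppM sf_scaleM.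
have [w [nw Mw]] : exists w, nq w = p + q /\ sf M w w = q.
  apply: key; rewrite ?nq_gt0 //.
    by rewrite sfM -/a -/p /c1 divfK // subrr mulr0.
  have bq : b = c2 * q by rewrite /c2 divfK.
  by rewrite sfM -/b -/q bq -mulrBl mulrA mulVf // mul1r.
exists w; split => //.
move: Mw; rewrite sfM nw => /(congr1 (fun v => (c2 - c1) * v)).
rewrite mulrA mulfV // mul1r => Mw.
have -> : sf B w w = (c2 - c1) * q + c1 * (p + q).
  by rewrite -Mw subrK.
rewrite /c1 /c2; clearbody a b p q; field; by rewrite px qy.
Qed.

Lemma convn k (B : 'M[C]_k) m (xs : 'I_m -> 'cV[C]_k) :
  exists w, nq w = \sum_r nq (xs r) /\ sf B w w = \sum_r sf B (xs r) (xs r).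
Proof.
elim: m xs => [|m IH] xs.
  by exists 0; rewrite !big_ord0 /nq !sf0l.
have [w [nw Bw]] := IH (fun r => xs (widen_ord (leqnSn m) r)).
have [w' [nw' Bw']] := conv2 B w (xs ord_max).
by exists w'; rewrite !big_ord_recr /= -nw -Bw.
Qed.

End Forms.
Section Block.
Variable C : numClosedFieldType.

Lemma adj_mxcol n m (B : 'I_m -> 'cV[C]_n) :
  adj_mx (\mxcol_i B i) = \mxrow_i adj_mx (B i).
Proof. by apply/matrixP => i j; rewrite !mxE. Qed.

Lemma block_form n m (B : 'I_m -> 'I_m -> 'M[C]_n) (x : 'cV[C]_(\sum_(r < m) n)) :
  (adj_mx x *m (\mxblock_(r < m, s < m) B r s) *m x) 0 0 =
  \sum_s \sum_r sf (B r s) (submxcol x r) (submxcol x s).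
Proof.
rewrite -[x in LHS]submxcolK -[x in (_ *m x) 0 0]submxcolK.
rewrite adj_mxcol mul_mxrow_mxblock mul_mxrow_mxcol summxE.
apply: eq_bigr => s _; rewrite mulmx_suml summxE.
by rewrite mxcolK.
Qed.


Lemma sf0M k (u v : 'cV[C]_k) : sf 0 u v = 0.
Proof. by rewrite /sf mulmx0 mul0mx mxE. Qed.
Lemma sf0r k (M : 'M[C]_k) u : sf M u 0 = 0.
Proof. by rewrite /sf mulmx0 mxE. Qed.

Lemma vnormE k (u : 'cV[C]_k) : vnorm u = sqrtC (nq u).
Proof. by rewrite /vnorm nqE. Qed.

Lemma amgm (lam a b : C) : 0 < lam -> a \is Num.real -> b \is Num.real ->
  a * b <= (lam * a ^+ 2 + lam^-1 * b ^+ 2) / 2.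
Proof.
move=> l0 ar br; rewrite -subr_ge0.
have ln0 : lam != 0 by rewrite gt_eqF.
have -> : (lam * a ^+ 2 + lam^-1 * b ^+ 2) / 2 - a * b =
          (lam * a - b) ^+ 2 / (2 * lam).
  by field; rewrite ln0.
apply: divr_ge0; first by rewrite -realEsqr; apply: rpredB => //; apply: rpredM => //; apply: gtr0_real.
by rewrite mulr_ge0 ?ler0n ?ltW.
Qed.

Lemma cs1 k (u w : 'cV[C]_k) lam : 0 < lam ->
  `|sf 1%:M u w| <= (lam * nq u + lam^-1 * nq w) / 2.
Proof.
move=> l0; rewrite sf1E !nqE.
apply: le_trans (ler_norm_sum _ _ _) _.
rewrite !mulr_sumr -big_split mulr_suml /=.
apply: ler_sum => i _; rewrite normrM norm_conjC.
by apply: amgm; rewrite ?normr_real.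
Qed.

Lemma term_bound k (M : 'M[C]_k) c (u v : 'cV[C]_k) : 0 <= c ->
  (forall x, vnorm (M *m x) <= c * vnorm x) ->
  `|sf M u v| <= c * (nq u + nq v) / 2.
Proof.
move=> c0 hM.
have -> : sf M u v = sf 1%:M u (M *m v) by rewrite /sf mulmx1 mulmxA.
have hw : nq (M *m v) <= c ^+ 2 * nq v.
  have := hM v; rewrite !vnormE => h.
  rewrite -[nq (M *m v)]sqrtCK -[nq v]sqrtCK -exprMn !expr2.
  by rewrite ler_pM ?sqrtC_ge0 ?nq_ge0.
have [c00|cn0] := eqVneq c 0.
  have : nq (M *m v) = 0.
    by apply/eqP; rewrite eq_le nq_ge0 andbT; move: hw; rewrite c00 expr0n /= mul0r.
  by move/nq_eq0 => ->; rewrite sf0r normr0 c00 !mul0r.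
have cp : 0 < c by rewrite lt_def cn0.
apply: le_trans (cs1 _ _ cp) _.
apply: le_trans (_ : _ <= (c * nq u + c^-1 * (c ^+ 2 * nq v)) / 2) _.
  apply: ler_wpM2r; first by rewrite invr_ge0 ler0n.
  by rewrite lerD2l; apply: ler_wpM2l => //; rewrite invr_ge0.
have -> : (c * nq u + c^-1 * (c ^+ 2 * nq v)) / 2 = c * (nq u + nq v) / 2.
  by field.
by [].
Qed.

Lemma nq_blocks n m (x : 'cV[C]_(\sum_(r < m) n)) :
  nq x = \sum_r nq (submxcol x r).
Proof.
rewrite /nq /sf mulmx1 -[x in LHS]submxcolK -[x in (_ *m x) 0 0]submxcolK.
rewrite adj_mxcol mul_mxrow_mxcol summxE.
by apply: eq_bigr => r _; rewrite mxcolK mulmx1.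
Qed.

Lemma sum_if_le1 m (P : 'I_m -> bool) (c : C) : 0 <= c ->
  (forall i j, P i -> P j -> i = j) -> \sum_i (if P i then c else 0) <= c.
Proof.
move=> c0 uP; case: (pickP P) => [i Pi|nP].
  rewrite (bigD1 i) //= Pi big1 ?addr0 //.
  move=> j ji; case: ifP => // Pj.
  by move: ji; rewrite (uP _ _ Pj Pi) eqxx.
by rewrite big1 // => i _; rewrite nP.
Qed.

End Block.
Theorem mainTheorem8 (C : numClosedFieldType) (n N m : nat)
    (A : nat -> 'M[C]_n) (nrm : nat -> C) :
  (1 <= m)%N ->
  (forall l : nat, (1 <= l <= N)%N -> is_spectral_norm (A l) (nrm l)) ->
  forall z : C, fov (Lmat N m A) z ->
    dist_le (fov (A 0%N)) z (\sum_(1 <= l < N.+1) nrm l).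
Proof.
move=> m1 hA z [x [vx ->]] e e0.
have nrm0 l : (1 <= l <= N)%N -> 0 <= nrm l by move=> /hA [].
pose xr r := submxcol x r.
pose a r := nq (xr r).
have a0 r : 0 <= a r by apply: nq_ge0.
have suma : \sum_r a r = 1.
  rewrite /a /xr -nq_blocks; move: vx; rewrite vnormE => h.
  by rewrite -[nq x]sqrtCK h expr1n.
have [w [nw Aw]] := convn (A 0%N) xr.
exists (sf (A 0%N) w w); split.
  by exists w; split => //; rewrite vnormE nw suma sqrtC1.
set R := \sum_(1 <= l < N.+1) nrm l.
apply: (@le_lt_trans _ _ R); last by rewrite ltrDl.
rewrite /Lmat block_form Aw.
under [X in _ - X]eq_bigr => s _ do rewrite (bigD1 s) //= leqnn subnn leq0n /=.
rewrite big_split /= opprD addrA subrr add0r normrN.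
pose F (s r : 'I_m) (l : nat) : C :=
  if (val r == val s + l)%N then nrm l * (a r + a s) / 2 else 0.
have Fge0 s r l : (0 < l <= N)%N -> 0 <= F s r l.
  move=> hl; rewrite /F; case: ifP => _ //.
  by rewrite divr_ge0 ?ler0n // mulr_ge0 ?nrm0 // addr_ge0.
have Fsum_ge0 s r : 0 <= \sum_(1 <= l < N.+1) F s r l.
  rewrite big_nat_cond; apply: sumr_ge0 => l /andP[/andP[l1 lN] _].
  by apply: Fge0; rewrite l1 -ltnS.
have pair (s r : 'I_m) : r != s ->
    `|sf (if (s <= r)%N && (r - s <= minn m.-1 N)%N then A (r - s)%N else 0)
        (submxcol x r) (submxcol x s)| <= \sum_(1 <= l < N.+1) F s r l.
  move=> rs; case: ifP => [/andP[sr rsN]|_]; last by rewrite sf0M normr0 Fsum_ge0.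
  have l1 : (0 < r - s)%N.
    by rewrite subn_gt0 ltn_neqAle sr andbT; apply: contra rs => /eqP h; apply/eqP/val_inj.
  have lN : (r - s <= N)%N by apply: leq_trans rsN (geq_minr _ _).
  rewrite (bigD1_seq (r - s)%N) /= ?mem_index_iota ?l1 ?ltnS ?lN //; last first.
    by rewrite /index_iota iota_uniq.
  rewrite big1 ?addr0; last first.
    move=> l ll; rewrite /F ifF //; apply/negbTE; apply: contra ll => /eqP ->.
    by rewrite addKn.
  rewrite /F subnKC // eqxx.
  have [_ [hM _]] := hA _ (introT andP (conj l1 lN)).
  by apply: term_bound => //; apply: nrm0; rewrite l1 lN.
apply: le_trans (ler_norm_sum _ _ _) _.
apply: le_trans (_ : _ <= \sum_s \sum_(r | r != s) \sum_(1 <= l < N.+1) F s r l) _.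
  apply: ler_sum => s _; apply: le_trans (ler_norm_sum _ _ _) _.
  by apply: ler_sum => r rs; apply: pair.
apply: le_trans (_ : _ <= \sum_s \sum_r \sum_(1 <= l < N.+1) F s r l) _.
  apply: ler_sum => s _; rewrite [leRHS](bigD1 s) //=.
  exact: ler_wpDl (Fsum_ge0 _ _) (le_refl _).
under eq_bigr => s _ do rewrite exchange_big.
rewrite exchange_big /=.
rewrite /R big_nat_cond [leRHS]big_nat_cond; apply: ler_sum => l /andP[/andP[l1 lN] _].
have hl : (0 < l <= N)%N by rewrite l1 -ltnS.
have -> : \sum_s \sum_r F s r l = nrm l / 2 *
    (\sum_(s < m) \sum_(r < m) (if (val r == val s + l)%N then a r else 0) +
     \sum_(s < m) \sum_(r < m) (if (val r == val s + l)%N then a s else 0)).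
  rewrite -big_split mulr_sumr; apply: eq_bigr => s _.
  rewrite -big_split mulr_sumr; apply: eq_bigr => r _.
  by rewrite /F; case: ifP => _ /=; [rewrite mulrAC | rewrite addr0 mulr0].
apply: le_trans (_ : _ <= nrm l / 2 * (1 + 1)) _.
  apply: ler_wpM2l; first by rewrite divr_ge0 ?ler0n // nrm0.
  apply: lerD.
    rewrite exchange_big -suma /=; apply: ler_sum => r _.
    apply: sum_if_le1 => // s1 s2 /eqP h1 /eqP h2; apply: val_inj; apply/eqP.
    by rewrite -(eqn_add2r l) -h1 -h2.
  rewrite -suma; apply: ler_sum => s _.
  apply: sum_if_le1 => // r1 r2 /eqP h1 /eqP h2; apply: val_inj.
  by rewrite /= h1 h2.
rewrite (_ : nrm l / 2 * (1 + 1) = nrm l) //; by field.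
Qed.
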